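(* Let $\Sigma$ be a finite totally ordered alphabet, let $W = a_1\cdots a_n \in \Sigma^+$ have Lyndon factorization $W = L_1 L_2 \cdots L_k$, and let $1 \le l < k$, $m = |L_1 \cdots L_l|$. Let $sort(L_1\cdots L_l)$ be the list of positions $1,\dots,m$ sorted by the lexicographic order of the suffixes $W[i,m]$ of $L_1\cdots L_l$, let $sort(L_{l+1}\cdots L_k)$ be the list of positions $m+1,\dots,n$ sorted by the lexicographic order of the suffixes $W[i,n]$ of $L_{l+1}\cdots L_k$, and let $sort(L_1\cdots L_k)$ be the list of positions $1,\dots,n$ sorted by the lexicographic order of the suffixes $W[i,n]$ of $W$. Then $sort(L_1 \cdots L_k) = merge(sort(L_1\cdots L_l), sort(L_{l+1}\cdots L_k))$, where the merge compares positions by the lexicographic order of the corresponding suffixes of $W$.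
   Context: $W[i,j] = a_i \cdots a_j$. The lexicographic order is the usual one, with a proper prefix smaller than the longer word. A Lyndon word is a nonempty primitive word strictly smaller than all its other cyclic shifts (conjugates). The Lyndon factorization of $W$ is the unique factorization $W = L_1\cdots L_k$ into Lyndon words with $L_1 \ge \cdots \ge L_k$ lexicographically. If $l_1, l_2$ are two sorted lists of elements of a totally ordered set, $merge(l_1,l_2)$ is the sorted list of all elements of $l_1$ and $l_2$. *)

(* Defs.v *)
From mathcomp Require Import all_boot all_order.
Set Implicit Arguments. Unset Strict Implicit. Unset Printing Implicit Defensive.
Import Order.TTheory.
Local Open Scope order_scope.

Section Words.
Context {d : Order.disp_t} {T : finOrderType d}.

Fixpoint lexle (s t : seq T) : bool :=
  match s, t with
  | [::], _ => true
  | _ :: _, [::] => false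
  | x :: s', y :: t' => (x < y) || ((x == y) && lexle s' t')
  end.

Definition lexlt (s t : seq T) : bool := lexle s t && (s != t).

(* Lyndon word: nonempty, strictly smaller than all its other cyclic shifts
   (rot i w for 0 < i < |w|); this also forces primitivity. *)
Definition lyndon (w : seq T) : bool :=
  (0 < size w)%N && [forall i : 'I_(size w), (0 < i)%N ==> lexlt w (rot i w)].

Definition lyndon_factorization (W : seq T) (fs : seq (seq T)) : Prop :=
  [/\ flatten fs = W, all lyndon fs &
      forall j, (j.+1 < size fs)%N -> lexle (nth [::] fs j.+1) (nth [::] fs j)].

(* W[i,j] = a_i ... a_j with 1-based positions *)
Definition subword (W : seq T) (i j : nat) : seq T := drop i.-1 (take j W).

Definition sort_suffixes (W : seq T) (lo hi : nat) : seq nat :=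
  sort (fun i j => lexle (subword W i hi) (subword W j hi)) (iota lo (hi.+1 - lo)).

End Words.

(* Main.v *)
Require Import Defs.
From mathcomp Require Import all_boot all_order zify.
Import Order.TTheory.
Set Implicit Arguments. Unset Strict Implicit. Unset Printing Implicit Defensive.

Section L.
Context {d : Order.disp_t} {T : finOrderType d}.
Local Open Scope order_scope.
Implicit Types s t u : seq T.

Lemma lexle_refl s : lexle s s.
Proof. by elim: s => //= x s ->; rewrite eqxx orbT. Qed.

Lemma lexle_trans s t u : lexle s t -> lexle t u -> lexle s u.
Proof.
elim: s t u => [//|x s IH] [|y t] [|z u] //=.
move=> /orP[xy|/andP[/eqP-> st]] /orP[yz|/andP[/eqP<- tu]].
- by rewrite (lt_trans xy yz).
- by rewrite xy.
- by rewrite yz.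
- by rewrite eqxx (IH _ _ st tu) orbT.
Qed.

Lemma lexle_total s t : lexle s t || lexle t s.
Proof.
elim: s t => [//|x s IH] [|y t] //=.
case: (ltgtP x y) => //= ->; by rewrite eqxx /= IH.
Qed.

Lemma lexle_anti s t : lexle s t -> lexle t s -> s = t.
Proof.
elim: s t => [|x s IH] [|y t] //=.
move=> /orP[xy|/andP[/eqP-> st]] /orP[yx|/andP[/eqP yx ts]].
- by move: (lt_trans xy yx); rewrite ltxx.
- by move: xy; rewrite yx ltxx.
- by move: yx; rewrite ltxx.
- by rewrite (IH _ st ts).
Qed.

Lemma lexle_catl p s t : lexle (p ++ s) (p ++ t) = lexle s t.
Proof. by elim: p => //= x p ->; rewrite ltxx eqxx. Qed.

Lemma lexle_prefix s r : lexle s (s ++ r).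
Proof. by elim: s => //= x s ->; rewrite eqxx orbT. Qed.

Definition lt_mm s t := exists p a b u v,
  [/\ s = p ++ a :: u, t = p ++ b :: v & a < b].

Lemma lt_mm_cat s t Y Y' : lt_mm s t -> lt_mm (s ++ Y) (t ++ Y').
Proof.
case=> p [a [b [u [v [-> -> ab]]]]].
by exists p, a, b, (u ++ Y), (v ++ Y'); rewrite -!catA.
Qed.

Lemma lt_mm_le s t : lt_mm s t -> lexle s t.
Proof.
case=> p [a [b [u [v [-> -> ab]]]]].
by rewrite lexle_catl /= ab.
Qed.

Lemma lt_mm_nle s t : lt_mm s t -> ~~ lexle t s.
Proof.
case=> p [a [b [u [v [-> -> ab]]]]].
rewrite lexle_catl /= negb_or negb_and; rewrite lt_gtF //=.
by rewrite (gt_eqF ab).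
Qed.

Lemma lexleP s t : lexle s t -> (exists r, t = s ++ r) \/ lt_mm s t.
Proof.
elim: s t => [|x s IH] t; first by left; exists t.
case: t => [|y t] //=.
move=> /orP[xy|/andP[/eqP-> st]].
  by right; exists [::], x, y, s, t.
case: (IH _ st) => [[r ->]|[p [a [b [u [v [-> -> ab]]]]]]].
  by left; exists r.
by right; exists (y :: p), a, b, u, v.
Qed.

Lemma lexle_lt_mm_ge s t : lexle s t -> lt_mm t s -> False.
Proof. by move=> st /lt_mm_nle; rewrite st. Qed.

Lemma lyndon_mm L i : lyndon L -> (0 < i < size L)%N -> lt_mm L (drop i L).
Proof.
case/andP=> _ /forallP H /andP[i0 iL].
have Hr : forall j, (0 < j < size L)%N -> lexlt L (rot j L).
  move=> j /andP[j0 jL]; move: (H (Ordinal jL)) => /implyP; exact.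
have := Hr i; rewrite i0 iL => /(_ isT) /andP[le ne].
rewrite /rot in le ne.
set t := drop i L in le ne *; set p := take i L in le ne.
have Lpt : L = p ++ t by rewrite cat_take_drop.
have [lt|lt] := orP (lexle_total L t).
  case: (lexleP lt) => [[r tr]|//].
  by move: (congr1 size tr); rewrite size_cat size_drop; move: iL i0 => /[swap]; case: (size r) => [|?] ? ? ;lia.
case: (lexleP lt) => [[r Ltr]|mm]; last first.
  by exfalso; apply: (lexle_lt_mm_ge le); rewrite -[X in lt_mm _ X]cats0; apply: lt_mm_cat.
have sr : size r = size p.
  by move: (congr1 size Ltr) (congr1 size Lpt); rewrite !size_cat; lia.
have rp : lexle r p.
  by move: le; rewrite {1}Ltr lexle_catl.
have rnp : r != p.
  by apply: contraNneq ne => rpe; rewrite {1}Ltr rpe.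
have := Hr (size t).
have t0 : (0 < size t)%N by rewrite size_drop; lia.
have tL : (size t < size L)%N by rewrite size_drop; lia.
rewrite t0 tL => /(_ isT) /andP[le2 _].
move: le2; rewrite {2}Ltr rot_size_cat {1}Lpt.
have [pr|pr] := orP (lexle_total p r).
  by move=> _; case/negP: rnp; rewrite (lexle_anti rp pr).
case: (lexleP pr) => [[q pq]|mm].
  have q0 : q = [::].
    by apply/eqP; rewrite -size_eq0; move: (congr1 size pq); rewrite size_cat sr => /eqP; rewrite -{1}[size p]addn0 eqn_add2l eq_sym.
  by case/negP: rnp; rewrite pq q0 cats0.
by move=> le2; exfalso; apply: (lexle_lt_mm_ge le2); apply: lt_mm_cat.
Qed.

Lemma lemA (L : seq T) (Ms : seq (seq T)) : lyndon L -> all (fun M => lexle M L) Ms ->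
  lexle (flatten Ms) (L ++ flatten Ms).
Proof.
move=> lyL; elim: Ms => [|M Ms IH] //= /andP[ML allMs].
have IH' := IH allMs; set Z := flatten Ms in IH' *.
case: (lexleP ML) => [[t Lt]|mm]; last by apply: lt_mm_le; apply: lt_mm_cat.
rewrite {1}Lt -catA lexle_catl.
case: M Lt ML => [|x M] Lt ML; first by rewrite /= in Lt; rewrite -Lt.
case: t Lt => [|y t] Lt; first by rewrite cats0 in Lt; rewrite /= -cat_cons -Lt.
have mm : lt_mm L (y :: t).
  have -> : y :: t = drop (size (x :: M)) L by rewrite Lt drop_size_cat.
  apply: lyndon_mm => //; rewrite Lt size_cat /=; lia.
apply: (lexle_trans IH'); apply: lt_mm_le.
exact: (lt_mm_cat Z (x :: M ++ Z) mm).
Qed.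

Lemma lemB (gs hs : seq (seq T)) : all lyndon gs ->
  sorted (fun a b => lexle b a) (gs ++ hs) ->
  forall c, (c < size (flatten gs))%N ->
  lexle (flatten hs) (drop c (flatten gs) ++ flatten hs).
Proof.
elim: gs => [|g gs IH] /=; first by move=> _ _ c.
move=> /andP[lg lgs] srt c.
have srt' := path_sorted srt.
have tr : transitive (fun a b : seq T => lexle b a).
  by move=> x y z h1 h2; exact: lexle_trans h2 h1.
have allg := order_path_min tr srt.
have A := lemA lg allg; rewrite flatten_cat in A.
set F' := flatten gs in A IH *; set H := flatten hs in A IH *.
have H1 : lexle H (F' ++ H).
  case E: (size F') => [|k].
    by move/eqP: E; rewrite size_eq0 => /eqP ->; exact: lexle_refl.
  by have := IH lgs srt' 0; rewrite drop0 E; apply.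
rewrite size_cat drop_cat => cl.
case: ifP => cg.
  rewrite -catA; case: c cl cg => [|c] cl cg.
    by rewrite drop0; exact: lexle_trans H1 A.
  apply: (lexle_trans H1); apply: (lexle_trans A); apply: lt_mm_le.
  by apply: lt_mm_cat; apply: lyndon_mm => //; rewrite cg.
apply: IH => //; move/negbT: cg; rewrite -leqNgt => cg; lia.
Qed.

Lemma lemK (U V : seq T) :
  (forall c, (c < size U)%N -> lexle V (drop c U ++ V)) ->
  forall a b, (b < size U)%N ->
  lexle (drop a U) (drop b U) -> lexle (drop a U ++ V) (drop b U ++ V).
Proof.
move=> HB a b bU; set x := drop a U; set y := drop b U => le.
case: (lexleP le) => [[r yr]|mm]; last by apply: lt_mm_le; apply: lt_mm_cat.
rewrite yr -catA lexle_catl.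
case: r yr => [|z r] yr; first exact: lexle_refl.
have -> : z :: r = drop (size x + b) U by rewrite -drop_drop -/y yr drop_size_cat.
apply: HB; move: (congr1 size yr); rewrite size_cat /y size_drop /=; lia.
Qed.
End L.

Theorem proposition1 (d : Order.disp_t) (T : finOrderType d)
    (W : seq T) (fs : seq (seq T)) (l : nat) :
  (0 < size W)%N ->
  lyndon_factorization W fs ->
  (1 <= l)%N -> (l < size fs)%N ->
  let n := size W in
  let m := size (flatten (take l fs)) in
  sort_suffixes W 1 n =
  merge (fun i j => lexle (subword W i n) (subword W j n))
        (sort_suffixes W 1 m) (sort_suffixes W m.+1 n).
Proof.
move=> Wpos [flat lyn dec] l1 ll n m.
rewrite /sort_suffixes /subword /n take_size !subSS !subn0.
set U := flatten (take l fs); set V := flatten (drop l fs).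
have hW : W = U ++ V by rewrite -flatten_cat cat_take_drop flat.
have mn : (m <= size W)%N by rewrite hW size_cat /m -/U; lia.
set R := fun i j => lexle (drop i.-1 W) (drop j.-1 W).
have totR : total R by move=> i j; exact: lexle_total.
apply: (@sorted_eq_in _ R).
- by move=> ? ? ? _ _ _; exact: lexle_trans.
- move=> i j; rewrite !mem_sort !mem_iota => /andP[hi1 hi2] /andP[hj1 hj2] /andP[h1 h2].
  have := congr1 size (lexle_anti h1 h2); rewrite !size_drop; lia.
- exact: sort_sorted.
- apply: merge_sorted => //; last exact: sort_sorted.
  apply: (@sub_in_sorted _ (mem (iota 1 m))); last first.
    - apply: sort_sorted => i j; exact: lexle_total.
    - by apply/allP => x; rewrite mem_sort.
  move=> i j; rewrite /= !mem_iota => /andP[hi1 hi2] /andP[hj1 hj2].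
  rewrite /R hW take_size_cat //.
  have Um : size U = m by [].
  rewrite !drop_cat ifT; last lia. rewrite ifT; last lia.
  apply: lemK; last lia.
  apply: lemB.
    by apply/allP => x /mem_take; exact: (allP lyn).
  rewrite cat_take_drop; apply/(sortedP [::]) => j' hj'; exact: dec.
- rewrite perm_sort perm_sym perm_merge.
  have -> : iota 1 (size W) = iota 1 m ++ iota m.+1 (size W - m).
    by rewrite -[m.+1]/(1 + m) -iotaD; congr iota; lia.
  by apply: perm_cat; rewrite perm_sort perm_refl.
Qed.
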